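(* Let $\Phi=B_l$ with $l\ge2$, fix a system of positive roots $\Phi^+$, and let $\Delta$ be a nonempty subset of $\Phi^+$. Then there exist a long root $\alpha\in\Phi^+$ and a root $\beta\in\Delta$ such that $\alpha+\gamma\notin\Phi$ for all $\gamma\in\Delta$ and $(\alpha,\beta)\ne0$.
   Context: $(\cdot,\cdot)$ denotes the inner product of the Euclidean space containing the root system. *)

(* Defs.v *)
From HB Require Import structures.
From mathcomp Require Import all_boot all_order all_algebra.
Set Implicit Arguments. Unset Strict Implicit. Unset Printing Implicit Defensive.
Import Order.TTheory GRing.Theory Num.Theory.
Local Open Scope ring_scope.

(* Vectors of Z^l (coordinates w.r.t. the orthonormal basis e_1..e_l of R^l). *)
Definition vecZ (l : nat) := 'rV[int]_l.

Definition dotZ (l : nat) (a b : vecZ l) : int := \sum_(i < l) a ord0 i * b ord0 i.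

(* Root system B_l realised in R^l:  { +-e_i } U { +-e_i +- e_j, i <> j }.
   Equivalently: nonzero integer vectors with entries in {-1,0,1} and
   at most two nonzero entries. *)
Definition rootB (l : nat) (a : vecZ l) : bool :=
  [forall i, (a ord0 i == 0) || (a ord0 i == 1) || (a ord0 i == -1)] &&
  (0 < #|[set i | a ord0 i != 0]| <= 2)%N.

Definition longB (l : nat) (a : vecZ l) : bool := dotZ a a == 2.

(* A system of positive roots: the roots on which some linear functional,
   nonvanishing on all roots (a regular functional), is positive. *)
Definition eval_fun (l : nat) (v : 'rV[rat]_l) (a : vecZ l) : rat :=
  \sum_(i < l) (a ord0 i)%:~R * v ord0 i.

Definition is_positive_system (l : nat) (P : vecZ l -> Prop) : Prop :=
  exists v : 'rV[rat]_l,
    (forall a, rootB a -> eval_fun v a != 0) /\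
    (forall a, P a <-> (rootB a /\ 0 < eval_fun v a)).

(* Main.v *)
Require Import Defs.
From HB Require Import structures.
From mathcomp Require Import all_boot all_order all_algebra zify ring lra.
Import Order.TTheory GRing.Theory Num.Theory.
From Stdlib Require Import ClassicalEpsilon.
Set Implicit Arguments. Unset Strict Implicit. Unset Printing Implicit Defensive.
Local Open Scope ring_scope.

Definition good (x : int) := (x == 0) || (x == 1) || (x == -1).

Lemma sq_good (x : int) : x * x <= 2 -> good x.
Proof. rewrite /good; nia. Qed.

Lemma good_sq (x : int) : good x -> x * x = ((x != 0) : nat)%:Z.
Proof. by rewrite /good => /orP[/orP[]|] /eqP ->. Qed.

Section S.
Variable l : nat.
Implicit Types a b c : vecZ l.

Lemma dotDl a b c : dotZ (a + b) c = dotZ a c + dotZ b c.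
Proof. rewrite /dotZ -big_split; apply: eq_bigr => i _; by rewrite mxE mulrDl. Qed.
Lemma dotNl a c : dotZ (- a) c = - dotZ a c.
Proof. rewrite /dotZ -sumrN; apply: eq_bigr => i _; by rewrite mxE mulNr. Qed.
Lemma dotC a b : dotZ a b = dotZ b a.
Proof. rewrite /dotZ; apply: eq_bigr => i _; by rewrite mulrC. Qed.
Lemma dotDr a b c : dotZ c (a + b) = dotZ c a + dotZ c b.
Proof. by rewrite dotC dotDl !(dotC c). Qed.
Lemma dotNr a c : dotZ c (- a) = - dotZ c a.
Proof. by rewrite dotC dotNl dotC. Qed.

Lemma evalD v a b : eval_fun v (a + b) = eval_fun v a + eval_fun v b.
Proof. rewrite /eval_fun -big_split; apply: eq_bigr => i _; by rewrite mxE intrD mulrDl. Qed.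
Lemma evalN v a : eval_fun v (- a) = - eval_fun v a.
Proof. rewrite /eval_fun -sumrN; apply: eq_bigr => i _; by rewrite mxE intrN mulNr. Qed.

Lemma dot_card a : (forall i, good (a ord0 i)) ->
  dotZ a a = (#|[set i | a ord0 i != 0]|)%:Z.
Proof.
move=> H; rewrite /dotZ (eq_bigr (fun i => ((a ord0 i != 0) : nat)%:Z)); last first.
  by move=> i _; rewrite good_sq.
rewrite -sum1_card big_mkcond /=.
rewrite (big_morph Posz PoszD (erefl (Posz 0%N))).
rewrite [RHS]big_mkcond /=; apply: eq_bigr => i _; rewrite inE; by case: (a ord0 i != 0).
Qed.

Lemma term_le a i : a ord0 i * a ord0 i <= dotZ a a.
Proof.
rewrite /dotZ (bigD1 i) //= lerDl; apply: sumr_ge0 => j _.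
by rewrite -expr2 sqr_ge0.
Qed.

Lemma rootB_dot a : rootB a = (dotZ a a == 1) || (dotZ a a == 2).
Proof.
apply/idP/idP.
  case/andP => /forallP H; rewrite dot_card //.
  move: #|_| => n; lia.
move=> h; have hle : dotZ a a <= 2 by case/orP: h => /eqP ->.
have G : forall i, good (a ord0 i).
  by move=> i; apply: sq_good; apply: le_trans (term_le a i) hle.
move: h; rewrite /rootB dot_card // => h; apply/andP; split.
  by apply/forallP.
by move: h; move: #|_| => n; lia.
Qed.
Definition dec (x : {ffun 'I_l -> 'I_3}) : vecZ l := \row_i ((x i : nat)%:Z - 1).
Definition enc a : {ffun 'I_l -> 'I_3} := [ffun i => inord (absz (a ord0 i + 1))].

Lemma decK a : (forall i, good (a ord0 i)) -> dec (enc a) = a.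
Proof.
move=> H; apply/rowP => i; rewrite !mxE ffunE ord1.
by case/orP: (H i) => [/orP[]|] /eqP ->; rewrite inordK.
Qed.

Definition pb (Q : Prop) : bool := if excluded_middle_informative Q then true else false.
Lemma pbP (Q : Prop) : reflect Q (pb Q).
Proof. by rewrite /pb; case: excluded_middle_informative => h; constructor. Qed.

Lemma fin_max (P : vecZ l -> Prop) (f : vecZ l -> rat) :
  (forall a, P a -> forall i, good (a ord0 i)) -> (exists a, P a) ->
  exists a, P a /\ forall b, P b -> f b <= f a.
Proof.
move=> HP [a Pa].
pose C := [pred x | pb (P (dec x))].
have C0 : C (enc a) by rewrite inE; apply/pbP; rewrite decK //; exact: HP.
have [x Cx Hx] := @arg_maxP _ rat _ (enc a) C (fun x => f (dec x)) C0.
have Px : P (dec x) by move: Cx; rewrite inE => /pbP.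
exists (dec x); split => // b Pb.
have Cb : C (enc b) by rewrite inE; apply/pbP; rewrite decK //; exact: HP.
by have := Hx _ Cb; rewrite decK //; exact: HP.
Qed.

Lemma dot_delta j b : dotZ (delta_mx 0 j) b = b ord0 j.
Proof.
rewrite /dotZ (bigD1 j) //= big1 => [|k kj]; rewrite !mxE ?eqxx //=.
  by rewrite mul1r addr0.
by rewrite (negbTE kj) /= mul0r.
Qed.

Lemma root_good a : rootB a -> forall i, good (a ord0 i).
Proof. by case/andP => /forallP. Qed.

Lemma exists_zero a : (2 <= l)%N -> dotZ a a = 1 -> rootB a -> exists j, a ord0 j = 0.
Proof.
move=> hl h1 r; suff /existsP[j /eqP hj] : [exists j, a ord0 j == 0] by exists j.
case: (boolP [exists j, a ord0 j == 0]) => // /existsPn H.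
move: h1; rewrite dot_card ?root_good //.
have -> : [set i | a ord0 i != 0] = setT by apply/setP => i; rewrite !inE H.
  rewrite cardsT card_ord; move: hl; lia.
exact: root_good.
Qed.
End S.

Theorem lemma5p6 (l : nat) (hl : (2 <= l)%N)
  (Pos : vecZ l -> Prop) (hPos : is_positive_system Pos)
  (Delta : vecZ l -> Prop)
  (hsub : forall g, Delta g -> Pos g)
  (hne : exists g, Delta g) :
  exists alpha, [/\ Pos alpha, longB alpha,
    (forall g, Delta g -> ~~ rootB (alpha + g)) &
    exists2 beta, Delta beta & dotZ alpha beta != 0].
Proof.
case: hPos => v [hv hP].
pose cand a := [/\ Pos a, longB a & exists2 b, Delta b & dotZ a b != 0].
have posR : forall a : vecZ l, Pos a -> rootB a /\ 0 < eval_fun v a by move=> a /hP.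
have mkPos : forall a : vecZ l, rootB a -> 0 < eval_fun v a -> Pos a by move=> a r p; apply/hP.
have rd : forall a : vecZ l, rootB a -> dotZ a a = 1 \/ dotZ a a = 2.
  by move=> a; rewrite rootB_dot => /orP[]/eqP; [left|right].
have dr : forall a : vecZ l, dotZ a a = 1 \/ dotZ a a = 2 -> rootB a.
  by move=> a; rewrite rootB_dot => -[]->.
have [a [[Pa La [b Db Nab]] amax]] : exists a, cand a /\ forall b, cand b -> eval_fun v b <= eval_fun v a.
  apply: fin_max.
    by move=> a [Pa _ _]; apply: root_good; case: (posR a Pa).
  case: hne => g Dg.
  have [rg pg] := posR g (hsub g Dg).
  case: (rd g rg) => hg; last first.
    by exists g; split => //; [apply: hsub | apply/eqP | exists g => //; rewrite hg].
  have [j hj] := exists_zero hl hg rg.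
  pose u := g + delta_mx 0 j.
  have hu : dotZ u u = 2.
    rewrite /u dotDl !dotDr hg !dot_delta (dotC g) dot_delta hj mxE !eqxx /=; lia.
  have hug : dotZ u g = 1 by rewrite /u dotDl hg dot_delta hj addr0.
  have ru : rootB u by apply: dr; right.
  have := hv u ru; rewrite neq_lt => /orP[hneg|hpos].
    exists (- u); split.
    - apply: mkPos; first by apply: dr; right; rewrite dotNl dotNr opprK.
      by rewrite evalN oppr_gt0.
    - by rewrite /longB dotNl dotNr opprK hu.
    - by exists g => //; rewrite dotNl hug.
  exists u; split; [exact: mkPos | by rewrite /longB hu | by exists g => //; rewrite hug].
exists a; split => //; last by exists b.
have ha : dotZ a a = 2 by apply/eqP.
have [ra pa] := posR a Pa.
move=> g Dg; apply/negP => rag.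
have [rg pg] := posR g (hsub g Dg).
set x := dotZ a g.
have hag : dotZ (a + g) (a + g) = 2 + 2 * x + dotZ g g.
  by rewrite dotDl !dotDr (dotC g a) ha -/x; ring.
have cont : forall c, cand c -> eval_fun v a < eval_fun v c -> False.
  by move=> c /amax h1 h2; move: (lt_le_trans h2 h1); rewrite ltxx.
case: (rd g rg) => hg; rewrite hg in hag; case: (rd _ rag); rewrite hag => h.
- have hx : x = -1 by lia.
  apply: (cont (a + g + g)).
    have h2 : dotZ (a + g + g) (a + g + g) = 2.
      rewrite !dotDl !dotDr (dotC g a) ha hg -/x hx; lia.
    split.
    + by apply: mkPos; [apply: dr; right | rewrite !evalD; lra].
    + by rewrite /longB h2.
    + by exists g => //; rewrite !dotDl -/x hx hg.
  by rewrite !evalD; lra.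
- lia.
- lia.
- have hx : x = -1 by lia.
  apply: (cont (a + g)).
    split.
    + by apply: mkPos; [apply: dr; right; lia | rewrite evalD; lra].
    + by rewrite /longB hag hx.
    + by exists g => //; rewrite dotDl -/x hx hg.
  by rewrite evalD; lra.
Qed.
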